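(* Let $D$ be a strongly oriented graph, with $n(D)$ vertices and $m(D)$ arcs. Then $\overrightarrow{hn}_{g}(D)\leq m(D)-n(D)+2$.
   Context: An oriented graph is a digraph obtained from a finite simple graph by orienting each edge in exactly one direction (so there are no loops and never both arcs $(u,v)$ and $(v,u)$). It is strongly oriented if for every ordered pair $u,v$ of distinct vertices there is a directed path from $u$ to $v$. The geodetic interval function $I_g$ on an oriented graph $D$ assigns to a pair $(u,v)$ the set of vertices lying on some shortest directed $(u,v)$-path or on some shortest directed $(v,u)$-path (this set contains $u$ and $v$). For $S\subseteq V(D)$, $I_g(S)=\bigcup_{u,v\in S}I_g(u,v)$; a set $C$ is convex if $I_g(C)=C$; the convex hull of $S$ is the smallest convex set containing $S$ (equivalently, the union of the iterates $I_g^k(S)$). A hull set is a set whose convex hull is $V(D)$, and $\overrightarrow{hn}_{g}(D)$ (the geodetic hull number) is the minimum size of a hull set of $D$. *)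

(* Defs.v *)
From mathcomp Require Import all_boot.
From mathcomp Require Import boolp.
Set Implicit Arguments. Unset Strict Implicit. Unset Printing Implicit Defensive.

Section Digraph.
Variables (T : finType) (a : rel T).

Definition oriented : Prop :=
  (forall x, ~~ a x x) /\ (forall x y, a x y -> ~~ a y x).

(* a directed (u,v)-walk with arc sequence of length size p *)
Definition dwalk (u v : T) (p : seq T) : bool := path a u p && (last u p == v).

Definition strongly_connected : Prop :=
  forall u v : T, u != v -> exists p, dwalk u v p.

Definition strongly_oriented : Prop := oriented /\ strongly_connected.

Definition shortest_dpath (u v : T) (p : seq T) : Prop :=
  dwalk u v p /\ forall q, dwalk u v q -> size p <= size q.

Definition Ig (u v : T) : {set T} :=
  [set x | `[< exists p, shortest_dpath u v p /\ x \in u :: p >]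
        || `[< exists p, shortest_dpath v u p /\ x \in v :: p >] ].

Definition IgS (S : {set T}) : {set T} := \bigcup_(u in S) \bigcup_(v in S) Ig u v.

Definition convex (C : {set T}) : bool := IgS C == C.

Definition convex_hull (S : {set T}) : {set T} :=
  \bigcap_(C : {set T} | convex C && (S \subset C)) C.

Definition hull_set (S : {set T}) : bool := convex_hull S == [set: T].

Definition hull_number : nat :=
  \big[minn/#|T|]_(S : {set T} | hull_set S) #|S|.

Definition num_vertices : nat := #|T|.
Definition num_arcs : nat := #|[set e : T * T | a e.1 e.2]|.

End Digraph.

(* Main.v *)
Require Import Defs.
From mathcomp Require Import zify.
From mathcomp Require Import all_boot.
From mathcomp Require Import boolp.
Set Implicit Arguments. Unset Strict Implicit. Unset Printing Implicit Defensive.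

Lemma bigmin_le (I : eqType) (r : seq I) (P : pred I) (F : I -> nat) d j :
  j \in r -> P j -> \big[minn/d]_(i <- r | P i) F i <= F j.
Proof.
elim: r => // x r IH; rewrite inE big_cons => /orP[/eqP <- Pj|jr Pj].
  by rewrite Pj geq_minl.
case: (P x); last exact: IH.
by rewrite (leq_trans (geq_minr _ _)) // IH.
Qed.
Lemma bigmin_led (I : eqType) (r : seq I) (P : pred I) (F : I -> nat) d :
  \big[minn/d]_(i <- r | P i) F i <= d.
Proof.
elim: r => [|x r IH]; rewrite ?big_nil ?big_cons //.
case: (P x) => //; exact: leq_trans (geq_minr _ _) IH.
Qed.

Lemma arith n1 n2 n3 n4 n5 n6 : n6 + (1 + (n2 - n5)) <= n3 ->
 n1 <= n4.+1 -> n5 <= n2 -> n4 + n5 <= n6 + 2 -> n1 + n2 <= n3 + 2.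
Proof. lia. Qed.

Lemma arith2 k n1 n2 n3 : n1 - n2 <= k.+1 -> n2 < n3 -> n3 <= n1 -> n1 - n3 <= k.
Proof. lia. Qed.

Section Proof.
Variables (T : finType) (a : rel T).
Hypothesis Hor : oriented a.
Hypothesis Hsc : strongly_connected a.

Lemma shortest_exists u v p : dwalk a u v p -> exists q, shortest_dpath a u v q.
Proof.
move=> hp.
have ex : exists n, `[< exists q, size q = n /\ dwalk a u v q >].
  by exists (size p); apply/asboolP; exists p.
case: (ex_minnP ex) => n /asboolP [q [sq wq]] hmin.
exists q; split => // r wr; rewrite sq; apply: hmin; apply/asboolP; by exists r.
Qed.

Definition hull (S : {set T}) := convex_hull a S.

Lemma sub_hull (S : {set T}) : S \subset hull S.
Proof. by apply/bigcapsP => C /andP[]. Qed.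

Lemma hull_mono (S S' : {set T}) : S \subset S' -> hull S \subset hull S'.
Proof.
move=> sS; apply/bigcapsP => C /andP[cC sC].
apply: bigcap_inf; by rewrite cC (subset_trans sS sC).
Qed.

Lemma hull_closed (S : {set T}) u v p x : u \in hull S -> v \in hull S ->
  shortest_dpath a u v p -> x \in u :: p -> x \in hull S.
Proof.
move=> /bigcapP hu /bigcapP hv sp xp; apply/bigcapP => C PC.
have [cC _] := andP PC.
rewrite -(eqP cC); apply/bigcupP; exists u; first exact: hu C PC.
apply/bigcupP; exists v; first exact: hv C PC.
rewrite inE; apply/orP; left; apply/asboolP; by exists p.
Qed.

Lemma out_nb (S : {set T}) u v : u \in hull S -> v \in hull S -> u != v ->
  exists2 y, y \in hull S & a u y.
Proof.
move=> hu hv uv; case: (Hsc uv) => p /shortest_exists [q sq].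
case: q sq => [|y q] sq.
  by case: sq => /andP[_ /= /eqP e] _; rewrite e eqxx in uv.
exists y; first by apply: (hull_closed hu hv sq); rewrite !inE eqxx orbT.
by case: sq => /andP[/= /andP[]]. 
Qed.

Definition nxt (H : {set T}) v := odflt v [pick y in H | a v y].

Lemma nxtP (S : {set T}) v x w : x \in hull S -> w \in hull S -> x != w -> v \in hull S ->
  nxt (hull S) v \in hull S /\ a v (nxt (hull S) v).
Proof.
move=> hx hw xw hv.
have [y hy ay] : exists2 y, y \in hull S & a v y.
  case: (eqVneq v x) => [->|vx]; first exact: out_nb hx hw xw.
  exact: out_nb hv hx vx.
rewrite /nxt; case: pickP => [z /andP[]|] //=.
by move=> /(_ y); rewrite hy ay.
Qed.

Definition E (H : {set T}) := [set e : T * T | a e.1 e.2 && (e.1 \in H) && (e.2 \in H)].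

Lemma leave (H : {set T}) u v : u \in H -> v \notin H -> (exists p, dwalk a u v p) ->
  exists x w, [/\ x \in H, w \notin H & a x w].
Proof.
move=> + + [p]; elim: p u => [|y p IH] u hu hv /andP[/= pth /eqP lp].
  by rewrite -lp hu in hv.
case/andP: pth => auy pth.
case hy: (y \in H).
  by apply: (IH y hy hv); rewrite /dwalk pth lp eqxx.
by exists u, y; rewrite hy.
Qed.

Lemma step (S : {set T}) x w : x \in hull S -> w \in hull S -> x != w ->
  #|S| + #|hull S| <= #|E (hull S)| + 2 ->
  exists S', hull S' == [set: T] /\
              #|S'| + #|hull S'| <= #|E (hull S')| + 2.
Proof.
move=> hx hw xw.
move: {2}(#|T| - #|hull S|) (leqnn (#|T| - #|hull S|)) => k.
elim: k S x w hx hw xw => [|k IH] S x w hx hw xw hk hP.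
  exists S; split => //; rewrite eqEcard subsetT cardsT.
  by rewrite -subn_eq0 -leqn0.
case: (eqVneq (hull S) [set: T]) => [e|ne]; first by exists S; split => //; rewrite e.
have [v hv] : exists v, v \notin hull S.
  apply/existsP; move: ne; apply: contraR; rewrite negb_exists => /forallP h.
  by apply/eqP/setP => z; rewrite inE; move: (h z); rewrite negbK.
have xv : x != v by apply: contraNneq hv => <-.
case: (leave hx hv (Hsc xv)) => x' [w' [hx' hw' axw]].
pose S' := w' |: S; pose H := hull S; pose H' := hull S'.
have sub : H \subset H' by apply: hull_mono; apply: subsetUr.
have hw'H' : w' \in H'.
  by apply: (subsetP (sub_hull S')); rewrite !inE eqxx.
have hx'H' : x' \in H' := subsetP sub _ hx'.
have xw' : x' != w' by apply: contraNneq hw' => <-.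
have Hc : #|H| < #|H'|.
  apply: proper_card; rewrite properE sub /=; apply/subsetPn; by exists w'.
apply: (IH S' x' w' hx'H' hw'H' xw').
    exact: (arith2 hk Hc (max_card _)).
  pose I := [set (z, nxt H' z) | z in H' :\: H].
  have cI : #|I| = #|H' :\: H|.
    apply: card_in_imset => z1 z2 _ _ [] //.
  have xwI : (x', w') \notin I.
    apply/imsetP => [[z]]; rewrite inE => /andP[zH _] [ez _].
    by rewrite -ez hx' in zH.
  have dis : [disjoint E H & (x', w') |: I].
    rewrite -setI_eq0; apply/eqP/setP => [[z1 z2]]; rewrite !inE /=.
    apply/negbTE; rewrite negb_and; apply/orP.
    case: (boolP ((z1, z2) == (x', w'))) => [/eqP [-> ->]|_] /=.
      by left; rewrite (_ : (w' \in H) = false) ?andbF //; exact: negbTE hw'.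
    case: (boolP ((z1, z2) \in I)) => [/imsetP [z]|_]; last by right.
    rewrite inE => /andP[zH _] [-> _]; left.
    by rewrite (_ : (z \in H) = false) ?andbF //; exact: negbTE zH.
  have sE : E H :|: ((x', w') |: I) \subset E H'.
    apply/subsetP => [[z1 z2]]; rewrite !inE /= => /orP[|/orP[/eqP [-> ->]|]].
    - by move=> /andP[/andP[-> /(subsetP sub) ->] /(subsetP sub) ->].
    - by rewrite axw hx'H' hw'H'.
    move=> /imsetP [z]; rewrite inE => /andP[_ zH'] [-> ->].
    case: (nxtP hx'H' hw'H' xw' zH') => -> ->; by rewrite zH'.
  have cE := subset_leq_card sE.
  rewrite cardsU (disjoint_setI0 dis) cards0 subn0 cardsU1 xwI cI in cE.
  have cD : #|H' :\: H| = #|H'| - #|H| by rewrite cardsDS.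
  have cS : #|S'| <= #|S|.+1 by rewrite cardsU1; case: (w' \in S).
  have sHH : #|H| <= #|H'| by apply: subset_leq_card.
  rewrite cD in cE.
  change (#|S'| + #|H'| <= #|E H'| + 2).
  have hP' : #|S| + #|H| <= #|E H| + 2 by exact: hP.
  move: cE cS sHH hP'.
  exact: arith.
Qed.

Lemma hull_le (S : {set T}) : hull_set a S -> hull_number a <= #|S|.
Proof. move=> hS; rewrite /hull_number; apply: bigmin_le => //; exact: mem_index_enum. Qed.

Lemma base (H : {set T}) (S : {set T}) x w : H = hull S -> x \in H -> w \in H -> x != w ->
  #|H| <= #|E H|.
Proof.
move=> eH hx hw xw.
have -> : #|H| = #|[set (z, nxt H z) | z in H]|.
  by rewrite card_in_imset // => z1 z2 _ _ [].
apply: subset_leq_card; apply/subsetP => e /imsetP [z zH ->].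
rewrite inE /=; rewrite eH in zH hx hw *.
by case: (nxtP hx hw xw zH) => -> ->; rewrite zH.
Qed.

Lemma final : hull_number a + #|T| <= num_arcs a + 2.
Proof.
case: (leqP #|T| 1) => hT.
  have h : hull_number a <= #|T| by apply: bigmin_led.
  apply: leq_trans (leq_addl (num_arcs a) 2).
  exact: leq_add (leq_trans h hT) hT.
case/card_gt1P: hT => u [v [_ _ uv]].
case: (Hsc uv) => [[|y p]].
  by case/andP => _ /= /eqP e; rewrite e eqxx in uv.
case/andP => /= /andP[auy _] _.
have uy : u != y by apply: contraTneq auy => ->; exact: Hor.1.
pose S0 := [set u; y].
have hu : u \in hull S0 by apply: (subsetP (sub_hull S0)); rewrite !inE eqxx.
have hy : y \in hull S0 by apply: (subsetP (sub_hull S0)); rewrite !inE eqxx orbT.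
have b := base erefl hu hy uy.
have c0 : #|S0| <= 2 by rewrite cards2; case: (u == y).
have b' : #|S0| + #|hull S0| <= #|E (hull S0)| + 2.
  by rewrite [_ + 2]addnC; exact: leq_add c0 b.
have [S' [hS' bd]] := step hu hy uy b'.
have eE : E (hull S') = [set e : T * T | a e.1 e.2].
  by apply/setP => e; rewrite !inE (eqP hS') !inE !andbT.
rewrite eE (eqP hS') cardsT in bd.
have hl := hull_le hS'.
rewrite /num_arcs; apply: leq_trans bd; exact: leq_add hl (leqnn _).
Qed.

End Proof.

Theorem proposition3 (T : finType) (a : rel T) :
  strongly_oriented a ->
  hull_number a + num_vertices T <= num_arcs a + 2.
Proof. by case=> Hor Hsc; exact: final. Qed.
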